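(* For a real number $k\ge 1$, let $x_0(k)$ be the unique root of the equation $x-1-x^{\frac{k-1}{k}}=0$ in the interval $[1,\infty)$. Then $2\le x_0(k)<\max(k,e+2)$. *)

(* Defs.v *)
From Stdlib Require Import Reals.
Open Scope R_scope.

Definition f_root (k x : R) : R := x - 1 - Rpower x ((k - 1) / k).

(* Main.v *)
Require Import Defs.
From Stdlib Require Import Reals Lra Psatz.
Open Scope R_scope.

Theorem lemma3p2 (k x0 : R) (hk : 1 <= k)
  (hx1 : 1 <= x0) (hroot : f_root k x0 = 0) :
  2 <= x0 /\ x0 < Rmax k (exp 1 + 2).
Proof.
  unfold f_root, Rpower in hroot.
  set (L := ln x0) in *.
  set (a := (k - 1) / k) in *.
  assert (hx0 : 0 < x0) by lra.
  assert (eL : exp L = x0) by (apply exp_ln; lra).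
  assert (hL : 0 <= L).
  { pose proof (exp_ineq1_le (- L)) as h. rewrite exp_Ropp, eL in h.
    assert (/ x0 <= 1).
    { rewrite <- Rinv_1. apply Rinv_le_contravar; lra. }
    lra. }
  assert (ha : 0 <= a).
  { unfold a. apply Rmult_le_pos; [lra|]. left; apply Rinv_0_lt_compat; lra. }
  assert (eaL : exp (a * L) = x0 - 1) by lra.
  assert (h1 : 1 <= exp (a * L)).
  { pose proof (exp_ineq1_le (a * L)). pose proof (Rmult_le_pos _ _ ha hL). lra. }
  split; [lra|].
  destruct (Rlt_or_le x0 (Rmax k (exp 1 + 2))) as [H|H]; [exact H|].
  exfalso.
  pose proof (Rmax_l k (exp 1 + 2)). pose proof (Rmax_r k (exp 1 + 2)).
  assert (hkx : k <= x0) by lra.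
  assert (hex : exp 1 + 2 <= x0) by lra.
  assert (he : 0 < exp 1) by apply exp_pos.
  assert (e1 : exp (L / k) * (x0 - 1) = x0).
  { rewrite <- eaL, <- exp_plus.
    replace (L / k + a * L) with L by (unfold a; field; lra). exact eL. }
  pose proof (exp_ineq1_le (L / k)) as h2.
  assert (h3 : (1 + L / k) * (x0 - 1) <= x0).
  { apply Rle_trans with (exp (L / k) * (x0 - 1)); [apply Rmult_le_compat_r; lra | lra]. }
  assert (h4 : L * (x0 - 1) <= k).
  { assert (L / k * (x0 - 1) <= 1) by nra.
    assert (L * (x0 - 1) = k * (L / k * (x0 - 1))) by (field; lra). nra. }
  assert (e2 : exp (1 - L) * x0 = exp 1).
  { pattern x0 at 1; rewrite <- eL. rewrite <- exp_plus. f_equal; ring. }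
  pose proof (exp_ineq1_le (1 - L)) as h5.
  assert (h6 : (2 - L) * x0 <= exp 1).
  { apply Rle_trans with (exp (1 - L) * x0); [apply Rmult_le_compat_r; lra | lra]. }
  assert (h7 : x0 * x0 < (2 * x0 - exp 1) * (x0 - 1)) by nra.
  assert (h8 : (2 * x0 - exp 1) <= L * x0) by lra.
  assert (h9 : (2 * x0 - exp 1) * (x0 - 1) <= L * x0 * (x0 - 1)).
  { apply Rmult_le_compat_r; lra. }
  nra.
Qed.
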